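(* There exist constants $\overline C>0$ and $0<\overline\theta<1$ such that for all $n\geq1$, all $j\in\{1,\dots,2p\}$, all $z\in\mathcal D_j$ and all $\alpha\neq\beta\in\mathscr W_n^j$, $$|\gamma_\alpha(z)-\gamma_\beta(z)|\geq\overline C\,\overline\theta^{\,r(\alpha,\beta)},$$ where $r(\alpha,\beta)=\max\{0\leq i\leq n:\ \alpha_k=\beta_k\text{ for all }k\leq i\}$.
   Context: Schottky setup: $\Gamma\subset PSL_2(\mathbb Z)$ is a non-elementary convex co-compact subgroup realized as a Schottky group: there are open Euclidean discs $\mathcal D_1,\dots,\mathcal D_{2p}\subset\mathbb C$ with centers on $\mathbb R$ and pairwise disjoint closures, and matrices $\gamma_1,\dots,\gamma_p\in SL_2(\mathbb Z)$ acting as Möbius maps with $\gamma_i(\mathcal D_i)=\widehat{\mathbb C}\setminus\overline{\mathcal D_{p+i}}$; $\Gamma$ is the free group they generate. Put $\gamma_{p+i}=\gamma_i^{-1}$ (indices mod $2p$); then $\gamma_i(\mathcal D_j)\subset\mathcal D_{p+i}$ for $j\neq i$. Let $\mathscr W_n$ be the set of $\alpha=(\alpha_1,\dots,\alpha_n)\in\{1,\dots,2p\}^n$ with $\alpha_{i+1}\neq\alpha_i+p\pmod{2p}$ for all $i$, $\mathscr W_n^j=\{\alpha\in\mathscr W_n:\alpha_n\neq j\}$, and $\gamma_\alpha=\gamma_{\alpha_1}\circ\cdots\circ\gamma_{\alpha_n}$; for $\alpha\in\mathscr W_n^j$, $\gamma_\alpha(\overline{\mathcal D_j})\subset\mathcal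 D_{p+\alpha_1}$. *)

(* Defs.v *)
From Stdlib Require Import Reals ZArith List Lia.
Open Scope R_scope.

Definition Cx : Type := (R * R)%type.
Definition Cadd (z w : Cx) : Cx := (fst z + fst w, snd z + snd w).
Definition Csub (z w : Cx) : Cx := (fst z - fst w, snd z - snd w).
Definition Cmul (z w : Cx) : Cx :=
  (fst z * fst w - snd z * snd w, fst z * snd w + snd z * fst w).
Definition Cinv (z : Cx) : Cx :=
  (fst z / (fst z ^ 2 + snd z ^ 2), - snd z / (fst z ^ 2 + snd z ^ 2)).
Definition Cdiv (z w : Cx) : Cx := Cmul z (Cinv w).
Definition Cnorm (z : Cx) : R := sqrt (fst z ^ 2 + snd z ^ 2).
Definition ofR (x : R) : Cx := (x, 0).
Definition ofZ (k : Z) : Cx := (IZR k, 0).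

(* (a, b, c, d) stands for the matrix [[a, b], [c, d]]. *)
Definition mat : Type := (Z * Z * Z * Z)%type.
Definition m_a (g : mat) : Z := fst (fst (fst g)).
Definition m_b (g : mat) : Z := snd (fst (fst g)).
Definition m_c (g : mat) : Z := snd (fst g).
Definition m_d (g : mat) : Z := snd g.
Definition det (g : mat) : Z := (m_a g * m_d g - m_b g * m_c g)%Z.
(* inverse of a determinant-one matrix *)
Definition matinv (g : mat) : mat := (m_d g, (- m_b g)%Z, (- m_c g)%Z, m_a g).

(* Moebius action on C (finite points; total division, used only where the
   denominator does not vanish). *)
Definition mobius (g : mat) (z : Cx) : Cx :=
  Cdiv (Cadd (Cmul (ofZ (m_a g)) z) (ofZ (m_b g)))
       (Cadd (Cmul (ofZ (m_c g)) z) (ofZ (m_d g))).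

(* Riemann sphere: None is the point at infinity. *)
Definition sphere : Type := option Cx.
Definition mobius_sphere (g : mat) (w : sphere) : sphere :=
  match w with
  | None => if Z.eqb (m_c g) 0 then None
            else Some (Cdiv (ofZ (m_a g)) (ofZ (m_c g)))
  | Some z =>
      if Req_EM_T (fst (Cadd (Cmul (ofZ (m_c g)) z) (ofZ (m_d g)))) 0 then
        if Req_EM_T (snd (Cadd (Cmul (ofZ (m_c g)) z) (ofZ (m_d g)))) 0
        then None else Some (mobius g z)
      else Some (mobius g z)
  end.

Definition in_disc (cen rad : nat -> R) (i : nat) (z : Cx) : Prop :=
  Cnorm (Csub z (ofR (cen i))) < rad i.
(* closure of the open disc (radius > 0) = closed disc *)
Definition in_cdisc (cen rad : nat -> R) (i : nat) (z : Cx) : Prop :=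
  Cnorm (Csub z (ofR (cen i))) <= rad i.
Definition in_cdisc_sphere (cen rad : nat -> R) (i : nat) (w : sphere) : Prop :=
  match w with None => False | Some z => in_cdisc cen rad i z end.

(* i + p (mod 2p), with representatives in {1,...,2p} *)
Definition opp_idx (p i : nat) : nat := if Nat.leb i p then (i + p)%nat else (i - p)%nat.
Definition valid_idx (p i : nat) : Prop := (1 <= i <= 2 * p)%nat.

(* gamma_1..gamma_p given by g; gamma_{p+i} = gamma_i^{-1} *)
Definition gen (p : nat) (g : nat -> mat) (i : nat) : mat :=
  if Nat.leb i p then g i else matinv (g (i - p)%nat).

Definition schottky (p : nat) (cen rad : nat -> R) (g : nat -> mat) : Prop :=
  (2 <= p)%nat /\   (* non-elementary: free group of rank >= 2 *)
  (forall i, valid_idx p i -> 0 < rad i) /\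
  (forall i j, valid_idx p i -> valid_idx p j -> i <> j ->
     forall z, ~ (in_cdisc cen rad i z /\ in_cdisc cen rad j z)) /\
  (forall i, (1 <= i <= p)%nat -> det (g i) = 1%Z) /\
  (* gamma_i(D_i) = hat C \ closure(D_{p+i}) *)
  (forall i, (1 <= i <= p)%nat ->
     forall w : sphere,
       (~ in_cdisc_sphere cen rad (p + i) w) <->
       (exists z, in_disc cen rad i z /\ mobius_sphere (g i) (Some z) = w)).

Fixpoint reduced (p : nat) (l : list nat) : Prop :=
  match l with
  | nil => True
  | a :: t =>
      valid_idx p a /\
      match t with
      | nil => True
      | b :: _ => b <> opp_idx p a
      end /\ reduced p t
  end.

Definition word (p n : nat) (a : list nat) : Prop := length a = n /\ reduced p a.
Definition word_j (p n j : nat) (a : list nat) : Prop :=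
  word p n a /\ last a 0%nat <> j.

Definition gamma_word (p : nat) (g : nat -> mat) (a : list nat) (z : Cx) : Cx :=
  fold_right (fun i w => mobius (gen p g i) w) z a.

Fixpoint common_prefix (a b : list nat) : nat :=
  match a, b with
  | x :: a', y :: b' => if Nat.eqb x y then S (common_prefix a' b') else 0%nat
  | _, _ => 0%nat
  end.

(* Main.v *)
Require Import Defs.
From Stdlib Require Import Reals ZArith List Lia Lra Classical.
From Coquelicot Require Import Coquelicot.
Open Scope R_scope.

Ltac toC := match goal with |- @eq _ ?a ?b => change (@eq C a b) end.
Definition Den (h : mat) (z : Cx) : Cx := Cadd (Cmul (ofZ (m_c h)) z) (ofZ (m_d h)).

Lemma Den_eq h z : Den h z = (RtoC (IZR (m_c h)) * z + RtoC (IZR (m_d h)))%C.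
Proof. reflexivity. Qed.

Lemma mob_eq h z :
  mobius h z = ((RtoC (IZR (m_a h)) * z + RtoC (IZR (m_b h))) / Den h z)%C.
Proof. reflexivity. Qed.

Lemma RtoC_opp' x : RtoC (- x) = (- RtoC x)%C.
Proof. unfold RtoC, Copp; simpl. f_equal. ring. Qed.

Lemma sub0 (z w : C) : (z - w = RtoC 0)%C -> z = w.
Proof.
  intro H. replace z with ((z - w) + w)%C by ring. rewrite H. ring.
Qed.

Lemma Cinv_nz (x : C) : x <> RtoC 0 -> (/ x)%C <> RtoC 0.
Proof.
  intros Hx H. assert (E : RtoC 1 = (x * / x)%C) by (field; auto).
  rewrite H in E. replace (x * RtoC 0)%C with (RtoC 0) in E by ring.
  apply (f_equal fst) in E. simpl in E. lra.
Qed.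

Lemma detC h : det h = 1%Z ->
  (RtoC (IZR (m_a h)) * RtoC (IZR (m_d h)) - RtoC (IZR (m_b h)) * RtoC (IZR (m_c h)))%C
  = RtoC 1.
Proof.
  intro H. unfold det in H.
  assert (HR : IZR (m_a h) * IZR (m_d h) - IZR (m_b h) * IZR (m_c h) = 1).
  { rewrite <- mult_IZR, <- mult_IZR, <- minus_IZR, H. reflexivity. }
  unfold RtoC, Cminus, Cmult, Cplus, Copp; simpl. f_equal; [rewrite <- HR | ]; ring.
Qed.

Lemma id_diff (A B C0 D z w : C) : (C0*z+D)%C <> RtoC 0 -> (C0*w+D)%C <> RtoC 0 ->
 ((A*z+B)/(C0*z+D) - (A*w+B)/(C0*w+D) = (A*D - B*C0)*(z-w)/((C0*z+D)*(C0*w+D)))%C.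
Proof. intros. field. split; auto. Qed.

Lemma id_invden (A B C0 D z : C) : (C0*z+D)%C <> RtoC 0 ->
 ((- C0) * ((A*z+B)/(C0*z+D)) + A = (A*D - B*C0)/(C0*z+D))%C.
Proof. intros. field. auto. Qed.

Lemma id_invnum (A B C0 D z : C) : (C0*z+D)%C <> RtoC 0 ->
 (D * ((A*z+B)/(C0*z+D)) + (- B) = (A*D - B*C0)*z/(C0*z+D))%C.
Proof. intros. field. auto. Qed.

Lemma mob_diff h (z w : C) : det h = 1%Z -> Den h z <> RtoC 0 -> Den h w <> RtoC 0 ->
  (mobius h z - mobius h w = (z - w) / (Den h z * Den h w))%C.
Proof.
  intros Hd Hz Hw. rewrite !mob_eq. rewrite !Den_eq in *.
  rewrite id_diff; auto. rewrite detC; auto. field. split; auto.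
Qed.

Lemma msph_cases h z :
  (Den h z = RtoC 0 /\ mobius_sphere h (Some z) = None) \/
  (Den h z <> RtoC 0 /\ mobius_sphere h (Some z) = Some (mobius h z)).
Proof.
  unfold mobius_sphere. change (Cadd (Cmul (ofZ (m_c h)) z) (ofZ (m_d h))) with (Den h z).
  destruct (Den h z) as [u v] eqn:E. simpl.
  destruct (Req_EM_T u 0) as [e1|e1]; [destruct (Req_EM_T v 0) as [e2|e2]|].
  - left. subst. split; reflexivity.
  - right. split; [intro H; injection H; intros; lra | reflexivity].
  - right. split; [intro H; injection H; intros; lra | reflexivity].
Qed.

Lemma detc_nz h z : det h = 1%Z -> Den h z = RtoC 0 -> RtoC (IZR (m_c h)) <> RtoC 0.
Proof.
  intros Hd HD Hc.
  assert (c0 : IZR (m_c h) = 0) by (apply (f_equal fst) in Hc; exact Hc).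
  apply eq_IZR in c0.
  apply (f_equal fst) in HD. unfold Den, Cadd, Cmul, ofZ in HD; simpl in HD.
  rewrite c0 in HD.
  assert (d0 : IZR (m_d h) = 0) by lra.
  apply eq_IZR in d0. unfold det in Hd. rewrite c0, d0 in Hd. lia.
Qed.

Lemma msph_inj h (z w : Cx) : det h = 1%Z ->
  mobius_sphere h (Some z) = mobius_sphere h (Some w) -> z = w.
Proof.
  intros Hd E.
  destruct (msph_cases h z) as [[Dz Ez]|[Dz Ez]];
  destruct (msph_cases h w) as [[Dw Ew]|[Dw Ew]];
  rewrite Ez, Ew in E; try discriminate.
  - pose proof (detc_nz h z Hd Dz) as Hc.
    rewrite Den_eq in Dz, Dw.
    assert (Hq : (z - w = ((RtoC (IZR (m_c h)) * z + RtoC (IZR (m_d h)))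
       - (RtoC (IZR (m_c h)) * w + RtoC (IZR (m_d h)))) / RtoC (IZR (m_c h)))%C)
      by (field; auto).
    rewrite Dz, Dw in Hq. apply sub0. rewrite Hq. field. auto.
  - apply (f_equal (fun o => match o with Some v => v | None => z end)) in E; cbv beta iota in E.
    pose proof (mob_diff h z w Hd Dz Dw) as Hm. rewrite E in Hm.
    apply sub0.
    assert (H2 : (z - w = (mobius h w - mobius h w) * (Den h z * Den h w))%C)
      by (rewrite Hm; field; split; auto).
    rewrite H2. ring.
Qed.

Lemma det_matinv h : det (matinv h) = det h.
Proof. unfold det, matinv, m_a, m_b, m_c, m_d; simpl. ring. Qed.

Lemma inv_den h z : det h = 1%Z -> Den h z <> RtoC 0 ->
  Den (matinv h) (mobius h z) = (/ Den h z)%C.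
Proof.
  intros Hd Hz. rewrite (Den_eq (matinv h)).
  change (m_c (matinv h)) with (- m_c h)%Z. change (m_d (matinv h)) with (m_a h).
  rewrite opp_IZR, RtoC_opp', mob_eq. rewrite Den_eq in *.
  rewrite id_invden; auto. rewrite detC; auto. toC. field. auto.
Qed.

Lemma inv_mob h z : det h = 1%Z -> Den h z <> RtoC 0 ->
  mobius (matinv h) (mobius h z) = z.
Proof.
  intros Hd Hz. rewrite (mob_eq (matinv h)). rewrite inv_den; auto.
  change (m_a (matinv h)) with (m_d h). change (m_b (matinv h)) with (- m_b h)%Z.
  rewrite opp_IZR, RtoC_opp', mob_eq. rewrite Den_eq in *.
  rewrite id_invnum; auto. rewrite detC; auto. toC. field. auto.
Qed.

Ltac leb_cases := repeat match goal with
  | |- context [Nat.leb ?a ?b] => destruct (Nat.leb_spec a b)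
  | H : context [Nat.leb ?a ?b] |- _ => destruct (Nat.leb_spec a b) end.

Lemma opp_valid p i : valid_idx p i -> valid_idx p (opp_idx p i).
Proof. unfold valid_idx, opp_idx; intros; leb_cases; lia. Qed.

Lemma opp_inv p i : valid_idx p i -> opp_idx p (opp_idx p i) = i.
Proof. unfold valid_idx, opp_idx; intros; leb_cases; lia. Qed.

Lemma opp_ne p x y : valid_idx p x -> valid_idx p y -> y <> opp_idx p x -> opp_idx p y <> x.
Proof. intros Hx Hy H E. apply H. rewrite <- E. symmetry. apply opp_inv; auto. Qed.

Lemma opp_inj p x y : valid_idx p x -> valid_idx p y -> x <> y -> opp_idx p x <> opp_idx p y.
Proof.
  intros Hx Hy H E. apply H. rewrite <- (opp_inv p x Hx), <- (opp_inv p y Hy), E.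
  reflexivity.
Qed.

Lemma det_gen p g i : (forall k, (1 <= k <= p)%nat -> det (g k) = 1%Z) ->
  valid_idx p i -> det (gen p g i) = 1%Z.
Proof.
  intros Hd Hi. unfold gen, valid_idx in *. leb_cases.
  - apply Hd; lia.
  - rewrite det_matinv. apply Hd; lia.
Qed.

Lemma last_cons2 (x y : nat) u d : last (x :: y :: u) d = last (y :: u) d.
Proof. reflexivity. Qed.

Lemma gw_cons p g x u s : gamma_word p g (x :: u) s = mobius (gen p g x) (gamma_word p g u s).
Proof. reflexivity. Qed.

Lemma last_app_cons : forall (pre l : list nat) x d,
  last (pre ++ x :: l) d = last (x :: l) d.
Proof.
  induction pre as [|y pre IH]; intros l x d; [reflexivity|].
  destruct pre as [|z pre']; [reflexivity|].
  change (last (y :: z :: (pre' ++ x :: l)) d = last (x :: l) d).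
  rewrite last_cons2. exact (IH l x d).
Qed.

Lemma reduced_app_r p : forall pre l, reduced p (pre ++ l) -> reduced p l.
Proof.
  induction pre as [|y pre IH]; simpl; intros l H; auto.
  destruct H as (_ & _ & H). eauto.
Qed.

Lemma reduced_app_l p : forall pre l, reduced p (pre ++ l) -> reduced p pre.
Proof.
  induction pre as [|y pre IH]; simpl; intros l H; auto.
  destruct H as (Hy & Hh & Hr). split; [auto | split; [| eapply IH; eauto]].
  destruct pre as [|b pre']; simpl in *; auto.
Qed.

Lemma reduced_app_last p : forall pre x l, valid_idx p x ->
  reduced p (pre ++ x :: l) -> last pre 0%nat <> opp_idx p x.
Proof.
  induction pre as [|y pre IH]; intros x l Hx H.
  - simpl. pose proof (opp_valid p x Hx). unfold valid_idx in *. lia.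
  - destruct H as (Hy & Hh & Hr). destruct pre as [|b pre'].
    + simpl in *. intro E. apply Hh. rewrite E. symmetry. apply opp_inv; auto.
    + rewrite last_cons2. apply (IH x l Hx Hr).
Qed.

Lemma decomp : forall (a b : list nat), length a = length b -> a <> b ->
  exists pre x y a' b', a = pre ++ x :: a' /\ b = pre ++ y :: b' /\ x <> y /\
    common_prefix a b = length pre.
Proof.
  induction a as [|x a IH]; intros [|y b] Hl Hne; simpl in Hl; try discriminate.
  - congruence.
  - destruct (Nat.eq_dec x y) as [<-|Hxy].
    + assert (Hab : a <> b) by congruence. injection Hl as Hl.
      destruct (IH b Hl Hab) as (pre & x' & y' & a' & b' & E1 & E2 & E3 & E4).
      exists (x :: pre), x', y', a', b'. subst a b. simpl. rewrite Nat.eqb_refl.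
      repeat split; auto.
    + exists nil, x, y, a, b. simpl. rewrite (proj2 (Nat.eqb_neq x y) Hxy). auto.
Qed.

Fixpoint sumR (f : nat -> R) (n : nat) : R :=
  match n with O => f O | S n' => f n + sumR f n' end.

Lemma sumR_nonneg f n : (forall i, 0 <= f i) -> 0 <= sumR f n.
Proof. intro Hf. induction n; simpl; [apply Hf|]. pose proof (Hf (S n)); lra. Qed.

Lemma sumR_ge f n k : (forall i, 0 <= f i) -> (k <= n)%nat -> f k <= sumR f n.
Proof.
  intros Hf. induction n; intros Hk; simpl.
  - replace k with 0%nat by lia. lra.
  - destruct (Nat.eq_dec k (S n)) as [->|Hne].
    + pose proof (sumR_nonneg f n Hf). lra.
    + pose proof (Hf (S n)). assert (f k <= sumR f n) by (apply IHn; lia). lra.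
Qed.

Fixpoint minR (f : nat -> R) (n : nat) : R :=
  match n with O => f O | S n' => Rmin (f n) (minR f n') end.

Lemma minR_le f n k : (k <= n)%nat -> minR f n <= f k.
Proof.
  induction n; intros Hk; simpl.
  - replace k with 0%nat by lia. lra.
  - destruct (Nat.eq_dec k (S n)) as [->|Hne].
    + apply Rmin_l.
    + eapply Rle_trans; [apply Rmin_r| apply IHn; lia].
Qed.

Lemma minR_pos f n : (forall i, 0 < f i) -> 0 < minR f n.
Proof. intro Hf. induction n; simpl; [apply Hf|]. apply Rmin_glb_lt; auto. Qed.

Lemma cd_eq cen rad i (s : Cx) :
  in_cdisc cen rad i s <-> Cmod (s - RtoC (cen i))%C <= rad i.
Proof. split; auto. Qed.

Lemma cn_real x c : Cnorm (Csub (ofR x) (ofR c)) = Rabs (x - c).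
Proof.
  rewrite <- Cmod_R. unfold Cnorm, Cmod, Csub, ofR, RtoC. cbn [fst snd].
  f_equal. ring.
Qed.

Lemma disj p cen rad g (HS : schottky p cen rad g) i k S :
  valid_idx p i -> valid_idx p k -> i <> k -> in_cdisc cen rad k S -> ~ in_cdisc cen rad i S.
Proof.
  intros Hi Hk Hik HkS HiS. destruct HS as (_ & _ & Hd & _).
  apply (Hd i k Hi Hk Hik S). auto.
Qed.

Lemma sep_pos p cen rad g (HS : schottky p cen rad g) i j :
  valid_idx p i -> valid_idx p j -> i <> j -> rad i + rad j < Rabs (cen i - cen j).
Proof.
  intros Hi Hj Hij. pose proof HS as (_ & Hrad & Hd & _).
  pose proof (Hrad i Hi). pose proof (Hrad j Hj).
  apply Rnot_le_lt. intro Hle.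
  destruct (Rle_dec (Rabs (cen i - cen j)) (rad i)) as [Hsm|Hbig].
  - apply (Hd i j Hi Hj Hij (ofR (cen j))). unfold in_cdisc. rewrite !cn_real.
    split.
    + replace (cen j - cen i) with (- (cen i - cen j)) by ring. rewrite Rabs_Ropp. lra.
    + replace (cen j - cen j) with 0 by ring. rewrite Rabs_R0. lra.
  - destruct (Rle_dec (cen i) (cen j)) as [Hc|Hc].
    + apply (Hd i j Hi Hj Hij (ofR (cen i + rad i))). unfold in_cdisc. rewrite !cn_real.
      revert Hle Hbig. unfold Rabs; repeat destruct Rcase_abs; lra.
    + apply (Hd i j Hi Hj Hij (ofR (cen i - rad i))). unfold in_cdisc. rewrite !cn_real.
      revert Hle Hbig. unfold Rabs; repeat destruct Rcase_abs; lra.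
Qed.

Lemma sep_bound cen rad i j (s t : Cx) :
  in_cdisc cen rad i s -> in_cdisc cen rad j t ->
  Rabs (cen i - cen j) - rad i - rad j <= Cmod (s - t)%C.
Proof.
  rewrite !cd_eq. intros Hs Ht.
  assert (E : RtoC (cen i - cen j) = ((- (s - RtoC (cen i))) + (s - t) + (t - RtoC (cen j)))%C).
  { unfold RtoC, Cminus, Cplus, Copp; simpl. f_equal; ring. }
  rewrite <- Cmod_R, E.
  pose proof (Cmod_triangle (- (s - RtoC (cen i)) + (s - t)) (t - RtoC (cen j))).
  pose proof (Cmod_triangle (- (s - RtoC (cen i))) (s - t)).
  rewrite Cmod_opp in *. lra.
Qed.

Lemma smap p cen rad g (HS : schottky p cen rad g) i (S : Cx) :
  valid_idx p i -> ~ in_cdisc cen rad i S ->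
  Den (gen p g i) S <> RtoC 0 /\ in_cdisc cen rad (opp_idx p i) (mobius (gen p g i) S).
Proof.
  intros Hi HSn. destruct HS as (Hp & Hrad & Hdisj & Hdet & Hmap).
  unfold gen, opp_idx. destruct (Nat.leb i p) eqn:E.
  - apply Nat.leb_le in E.
    assert (Hi' : (1 <= i <= p)%nat) by (unfold valid_idx in Hi; lia).
    destruct (msph_cases (g i) S) as [[D1 E1]|[D1 E1]].
    + exfalso. destruct (proj1 (Hmap i Hi' None) (fun f => f)) as [z [Hz Ez]].
      rewrite <- E1 in Ez. apply msph_inj in Ez; [|apply Hdet; auto].
      subst z. apply HSn. unfold in_cdisc, in_disc in *. lra.
    + split; auto.
      destruct (classic (in_cdisc cen rad (p + i) (mobius (g i) S))) as [Hin|Hout].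
      * rewrite Nat.add_comm. exact Hin.
      * exfalso. destruct (proj1 (Hmap i Hi' (Some (mobius (g i) S))) Hout) as [z [Hz Ez]].
        rewrite <- E1 in Ez. apply msph_inj in Ez; [|apply Hdet; auto].
        subst z. apply HSn. unfold in_cdisc, in_disc in *. lra.
  - apply Nat.leb_gt in E.
    assert (Hk : (1 <= i - p <= p)%nat) by (unfold valid_idx in *; lia).
    assert (Hik : i = (p + (i - p))%nat) by lia.
    rewrite Hik in HSn.
    destruct (proj1 (Hmap (i - p)%nat Hk (Some S)) HSn) as [z [Hz Ez]].
    destruct (msph_cases (g (i - p)%nat) z) as [[D1 E1]|[D1 E1]]; rewrite E1 in Ez;
      [discriminate|].
    apply (f_equal (fun o => match o with Some v => v | None => z end)) in Ez.
    cbv beta iota in Ez. subst S.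
    split.
    + rewrite inv_den; auto. apply Cinv_nz; auto.
    + rewrite inv_mob; auto. unfold in_cdisc, in_disc in *. lra.
Qed.

Definition R0 p (cen rad : nat -> R) : R :=
  1 + sumR (fun k => Rabs (cen k) + Rabs (rad k)) (2 * p).
Definition SB p (g : nat -> mat) : R :=
  sumR (fun k => Rabs (IZR (m_a (g k))) + Rabs (IZR (m_c (g k))) + Rabs (IZR (m_d (g k)))) p.
Definition Mb p cen rad g : R := 1 + SB p g * R0 p cen rad.
Definition kap p cen rad g : R := / (Mb p cen rad g * Mb p cen rad g).

Lemma R0_ge1 p cen rad : 1 <= R0 p cen rad.
Proof.
  unfold R0. pose proof (sumR_nonneg (fun k => Rabs (cen k) + Rabs (rad k)) (2*p)).
  assert (forall i, 0 <= Rabs (cen i) + Rabs (rad i))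
    by (intro i; pose proof (Rabs_pos (cen i)); pose proof (Rabs_pos (rad i)); lra).
  specialize (H H0). lra.
Qed.

Lemma SB_nonneg p g : 0 <= SB p g.
Proof.
  unfold SB. apply sumR_nonneg. intro i.
  pose proof (Rabs_pos (IZR (m_a (g i)))); pose proof (Rabs_pos (IZR (m_c (g i))));
  pose proof (Rabs_pos (IZR (m_d (g i)))); lra.
Qed.

Lemma Mb_ge1 p cen rad g : 1 <= Mb p cen rad g.
Proof.
  unfold Mb. pose proof (SB_nonneg p g). pose proof (R0_ge1 p cen rad). nra.
Qed.

Lemma kap_pos p cen rad g : 0 < kap p cen rad g.
Proof. unfold kap. pose proof (Mb_ge1 p cen rad g). apply Rinv_0_lt_compat. nra. Qed.

Lemma kap_le1 p cen rad g : kap p cen rad g <= 1.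
Proof.
  unfold kap. pose proof (Mb_ge1 p cen rad g). rewrite <- Rinv_1.
  apply Rinv_le_contravar; nra.
Qed.

Lemma normS p cen rad k (S : Cx) : valid_idx p k -> in_cdisc cen rad k S ->
  Cmod S <= R0 p cen rad - 1.
Proof.
  intros Hk HS. rewrite cd_eq in HS.
  replace S with ((S - RtoC (cen k)) + RtoC (cen k))%C
    by (toC; ring).
  pose proof (Cmod_triangle (S - RtoC (cen k)) (RtoC (cen k))).
  rewrite Cmod_R in H.
  assert (Rabs (cen k) + Rabs (rad k) <= sumR (fun k => Rabs (cen k) + Rabs (rad k)) (2*p)).
  { apply (sumR_ge (fun k => Rabs (cen k) + Rabs (rad k))).
    - intro i; pose proof (Rabs_pos (cen i)); pose proof (Rabs_pos (rad i)); lra.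
    - unfold valid_idx in Hk; lia. }
  pose proof (Rle_abs (rad k)). unfold R0. lra.
Qed.

Lemma gen_cd p g i : valid_idx p i ->
  Rabs (IZR (m_c (gen p g i))) + Rabs (IZR (m_d (gen p g i))) <= SB p g.
Proof.
  intro Hi. unfold SB.
  assert (Hnn : forall k, 0 <= Rabs (IZR (m_a (g k))) + Rabs (IZR (m_c (g k))) + Rabs (IZR (m_d (g k)))).
  { intro k. pose proof (Rabs_pos (IZR (m_a (g k)))); pose proof (Rabs_pos (IZR (m_c (g k))));
    pose proof (Rabs_pos (IZR (m_d (g k)))); lra. }
  unfold gen. destruct (Nat.leb i p) eqn:E.
  - apply Nat.leb_le in E.
    pose proof (sumR_ge _ p i Hnn E). simpl in H.
    pose proof (Rabs_pos (IZR (m_a (g i)))). lra.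
  - apply Nat.leb_gt in E. assert (Hk : (i - p <= p)%nat) by (unfold valid_idx in Hi; lia).
    pose proof (sumR_ge _ p (i - p) Hnn Hk). simpl in H.
    change (m_c (matinv (g (i - p)%nat))) with (- m_c (g (i - p)%nat))%Z.
    change (m_d (matinv (g (i - p)%nat))) with (m_a (g (i - p)%nat)).
    rewrite opp_IZR, Rabs_Ropp.
    pose proof (Rabs_pos (IZR (m_d (g (i - p)%nat)))). lra.
Qed.

Lemma den_bound p cen rad g i k (S : Cx) : valid_idx p i -> valid_idx p k ->
  in_cdisc cen rad k S -> Cmod (Den (gen p g i) S) <= Mb p cen rad g.
Proof.
  intros Hi Hk HS. pose proof (normS p cen rad k S Hk HS) as HN.
  pose proof (gen_cd p g i Hi) as Hcd.
  rewrite Den_eq.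
  set (c := IZR (m_c (gen p g i))) in *. set (d := IZR (m_d (gen p g i))) in *.
  pose proof (Cmod_triangle (RtoC c * S) (RtoC d)).
  rewrite Cmod_mult, !Cmod_R in H.
  pose proof (Rabs_pos c). pose proof (Rabs_pos d). pose proof (Cmod_ge_0 S).
  pose proof (R0_ge1 p cen rad). pose proof (SB_nonneg p g).
  unfold Mb.
  assert (Rabs c * Cmod S <= Rabs c * R0 p cen rad) by (apply Rmult_le_compat_l; lra).
  assert (Rabs d <= Rabs d * R0 p cen rad) by nra.
  assert ((Rabs c + Rabs d) * R0 p cen rad <= SB p g * R0 p cen rad)
    by (apply Rmult_le_compat_r; lra).
  nra.
Qed.

Lemma step p cen rad g (HS : schottky p cen rad g) x k k' (S T : Cx) :
  valid_idx p x -> valid_idx p k -> valid_idx p k' -> k <> x -> k' <> x ->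
  in_cdisc cen rad k S -> in_cdisc cen rad k' T ->
  kap p cen rad g * Cmod (S - T)%C <=
  Cmod (mobius (gen p g x) S - mobius (gen p g x) T)%C.
Proof.
  intros Hx Hk Hk' Hkx Hk'x HSk HTk.
  pose proof (disj p cen rad g HS x k S Hx Hk (not_eq_sym Hkx) HSk) as HS1.
  pose proof (disj p cen rad g HS x k' T Hx Hk' (not_eq_sym Hk'x) HTk) as HT1.
  destruct (smap p cen rad g HS x S Hx HS1) as [DS _].
  destruct (smap p cen rad g HS x T Hx HT1) as [DT _].
  pose proof HS as (_ & _ & _ & Hdet & _).
  rewrite mob_diff; auto; [|apply det_gen; auto].
  assert (DST : (Den (gen p g x) S * Den (gen p g x) T)%C <> RtoC 0).
  { intro E. apply (f_equal Cmod) in E. rewrite Cmod_mult, Cmod_0 in E.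
    apply Cmod_gt_0 in DS. apply Cmod_gt_0 in DT. nra. }
  rewrite Cmod_div; auto. rewrite Cmod_mult.
  apply Cmod_gt_0 in DS. apply Cmod_gt_0 in DT.
  pose proof (den_bound p cen rad g x k S Hx Hk HSk).
  pose proof (den_bound p cen rad g x k' T Hx Hk' HTk).
  unfold kap, Rdiv. rewrite Rmult_comm.
  apply Rmult_le_compat_l; [apply Cmod_ge_0|].
  apply Rinv_le_contravar; [nra|].
  apply Rmult_le_compat; lra.
Qed.

Definition loc p (u : list nat) (m : nat) : nat :=
  match u with nil => m | x :: _ => opp_idx p x end.

Lemma chain p cen rad g (HS : schottky p cen rad g) : forall u, reduced p u ->
  forall m (s : Cx), valid_idx p m -> in_cdisc cen rad m s -> last u 0%nat <> m ->
  valid_idx p (loc p u m) /\ in_cdisc cen rad (loc p u m) (gamma_word p g u s).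
Proof.
  induction u as [|x u IH]; intros Hr m s Hm Hs Hl.
  - simpl. auto.
  - destruct Hr as (Hx & Hhd & Hr).
    assert (Hl' : last u 0%nat <> m).
    { destruct u as [|y u']; [simpl; unfold valid_idx in Hm; lia|].
      rewrite last_cons2 in Hl. exact Hl. }
    destruct (IH Hr m s Hm Hs Hl') as [Hv Hin].
    assert (Hne : loc p u m <> x).
    { destruct u as [|y u'].
      - simpl. intro E. apply Hl. rewrite E. reflexivity.
      - simpl. apply opp_ne; auto. exact (proj1 Hr). }
    pose proof (disj p cen rad g HS x (loc p u m) _ Hx Hv (not_eq_sym Hne) Hin) as Hn.
    destruct (smap p cen rad g HS x _ Hx Hn) as [_ Hout].
    split; [apply opp_valid; auto|]. rewrite gw_cons. exact Hout.
Qed.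

Lemma dist p cen rad g (HS : schottky p cen rad g) : forall u, reduced p u ->
  forall m m' (s t : Cx), valid_idx p m -> valid_idx p m' ->
  in_cdisc cen rad m s -> in_cdisc cen rad m' t ->
  last u 0%nat <> m -> last u 0%nat <> m' ->
  kap p cen rad g ^ length u * Cmod (s - t)%C <=
  Cmod (gamma_word p g u s - gamma_word p g u t)%C.
Proof.
  induction u as [|x u IH]; intros Hr m m' s t Hm Hm' Hs Ht Hl1 Hl2.
  - simpl. lra.
  - pose proof Hr as (Hx & Hhd & Hr').
    assert (Hl1' : last u 0%nat <> m).
    { destruct u as [|y u']; [simpl; unfold valid_idx in Hm; lia|].
      rewrite last_cons2 in Hl1. exact Hl1. }
    assert (Hl2' : last u 0%nat <> m').
    { destruct u as [|y u']; [simpl; unfold valid_idx in Hm'; lia|].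
      rewrite last_cons2 in Hl2. exact Hl2. }
    destruct (chain p cen rad g HS u Hr' m s Hm Hs Hl1') as [Hv1 Hin1].
    destruct (chain p cen rad g HS u Hr' m' t Hm' Ht Hl2') as [Hv2 Hin2].
    assert (Hne1 : loc p u m <> x).
    { destruct u as [|y u'].
      - simpl. intro E. apply Hl1. rewrite E. reflexivity.
      - simpl. apply opp_ne; auto. exact (proj1 Hr'). }
    assert (Hne2 : loc p u m' <> x).
    { destruct u as [|y u'].
      - simpl. intro E. apply Hl2. rewrite E. reflexivity.
      - simpl. apply opp_ne; auto. exact (proj1 Hr'). }
    pose proof (IH Hr' m m' s t Hm Hm' Hs Ht Hl1' Hl2') as H1.
    pose proof (step p cen rad g HS x _ _ _ _ Hx Hv1 Hv2 Hne1 Hne2 Hin1 Hin2) as H2.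
    rewrite !gw_cons. simpl (length (x :: u)). rewrite <- tech_pow_Rmult.
    pose proof (kap_pos p cen rad g).
    rewrite Rmult_assoc.
    eapply Rle_trans; [|exact H2].
    apply Rmult_le_compat_l; lra.
Qed.

Definition fsep p (cen rad : nat -> R) (i j : nat) : R :=
  if (Nat.leb 1 i && Nat.leb i (2*p) && Nat.leb 1 j && Nat.leb j (2*p)
      && negb (Nat.eqb i j))%bool
  then Rmin 1 (Rabs (cen i - cen j) - rad i - rad j) else 1.

Definition del p cen rad : R := minR (fun i => minR (fsep p cen rad i) (2*p)) (2*p).

Lemma fsep_pos p cen rad g (HS : schottky p cen rad g) i j : 0 < fsep p cen rad i j.
Proof.
  unfold fsep.
  destruct (Nat.leb_spec 1 i); destruct (Nat.leb_spec i (2*p));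
  destruct (Nat.leb_spec 1 j); destruct (Nat.leb_spec j (2*p));
  destruct (Nat.eqb_spec i j); simpl; try lra.
  apply Rmin_glb_lt; [lra|].
  assert (Vi : valid_idx p i) by (unfold valid_idx; lia).
  assert (Vj : valid_idx p j) by (unfold valid_idx; lia).
  pose proof (sep_pos p cen rad g HS i j Vi Vj n). lra.
Qed.

Lemma del_pos p cen rad g (HS : schottky p cen rad g) : 0 < del p cen rad.
Proof.
  unfold del. apply minR_pos. intro i. apply minR_pos. intro j.
  apply (fsep_pos p cen rad g HS).
Qed.

Lemma del_le p cen rad i j (s t : Cx) : valid_idx p i -> valid_idx p j -> i <> j ->
  in_cdisc cen rad i s -> in_cdisc cen rad j t -> del p cen rad <= Cmod (s - t)%C.
Proof.
  intros Hi Hj Hij Hs Ht.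
  pose proof (sep_bound cen rad i j s t Hs Ht).
  assert (del p cen rad <= fsep p cen rad i j).
  { unfold del. eapply Rle_trans.
    - apply (minR_le _ (2*p) i). unfold valid_idx in Hi; lia.
    - apply minR_le. unfold valid_idx in Hj; lia. }
  unfold fsep in H0. unfold valid_idx in *.
  destruct (Nat.leb_spec 1 i); destruct (Nat.leb_spec i (2*p));
  destruct (Nat.leb_spec 1 j); destruct (Nat.leb_spec j (2*p));
  destruct (Nat.eqb_spec i j); simpl in H0; try lia.
  pose proof (Rmin_r 1 (Rabs (cen i - cen j) - rad i - rad j)). lra.
Qed.

Theorem lemma4p4 (p : nat) (cen rad : nat -> R) (g : nat -> mat)
  (HS : schottky p cen rad g) :
  exists (Cb th : R), 0 < Cb /\ 0 < th < 1 /\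
    forall (n j : nat) (z : Cx) (a b : list nat),
      (1 <= n)%nat -> valid_idx p j -> in_disc cen rad j z ->
      word_j p n j a -> word_j p n j b -> a <> b ->
      Cnorm (Csub (gamma_word p g a z) (gamma_word p g b z))
        >= Cb * th ^ (common_prefix a b).
Proof.
  pose proof (kap_pos p cen rad g) as Kp. pose proof (kap_le1 p cen rad g) as K1.
  pose proof (del_pos p cen rad g HS) as Dp.
  exists (del p cen rad), (kap p cen rad g / 2).
  split; [exact Dp|]. split; [split; lra|].
  intros n j z a b Hn Hj Hz [[La Ra] Lasta] [[Lb Rb] Lastb] Hab.
  destruct (decomp a b (eq_trans La (eq_sym Lb)) Hab)
    as (pre & x & y & a' & b' & Ea & Eb & Hxy & Ecp).
  rewrite Ecp.
  assert (Rxa : reduced p (x :: a')) by (apply (reduced_app_r p pre); rewrite <- Ea; auto).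
  assert (Ryb : reduced p (y :: b')) by (apply (reduced_app_r p pre); rewrite <- Eb; auto).
  assert (Rpre : reduced p pre) by (apply (reduced_app_l p pre (x :: a')); rewrite <- Ea; auto).
  assert (Hx : valid_idx p x) by exact (proj1 Rxa).
  assert (Hy : valid_idx p y) by exact (proj1 Ryb).
  assert (Hzc : in_cdisc cen rad j z) by (unfold in_cdisc, in_disc in *; lra).
  assert (La' : last (x :: a') 0%nat <> j) by (rewrite <- (last_app_cons pre), <- Ea; auto).
  assert (Lb' : last (y :: b') 0%nat <> j) by (rewrite <- (last_app_cons pre), <- Eb; auto).
  destruct (chain p cen rad g HS (x :: a') Rxa j z Hj Hzc La') as [Vs Hs].
  destruct (chain p cen rad g HS (y :: b') Ryb j z Hj Hzc Lb') as [Vt Ht].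
  simpl loc in Vs, Hs, Vt, Ht.
  assert (Lp1 : last pre 0%nat <> opp_idx p x)
    by (apply (reduced_app_last p pre x a' Hx); rewrite <- Ea; auto).
  assert (Lp2 : last pre 0%nat <> opp_idx p y)
    by (apply (reduced_app_last p pre y b' Hy); rewrite <- Eb; auto).
  pose proof (dist p cen rad g HS pre Rpre _ _ _ _ Vs Vt Hs Ht Lp1 Lp2) as HD.
  pose proof (del_le p cen rad _ _ _ _ Vs Vt (opp_inj p x y Hx Hy Hxy) Hs Ht) as HL.
  assert (Ga : gamma_word p g a z = gamma_word p g pre (gamma_word p g (x :: a') z))
    by (rewrite Ea; unfold gamma_word; apply fold_right_app).
  assert (Gb : gamma_word p g b z = gamma_word p g pre (gamma_word p g (y :: b') z))
    by (rewrite Eb; unfold gamma_word; apply fold_right_app).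
  rewrite Ga, Gb.
  change (Cnorm (Csub ?u ?v)) with (Cmod (u - v)%C).
  apply Rle_ge.
  assert (Hpw : (kap p cen rad g / 2) ^ length pre <= kap p cen rad g ^ length pre)
    by (apply pow_incr; lra).
  assert (Hpp : 0 <= (kap p cen rad g / 2) ^ length pre) by (apply pow_le; lra).
  assert (Hkp : 0 <= kap p cen rad g ^ length pre) by (apply pow_le; lra).
  eapply Rle_trans; [|exact HD].
  rewrite Rmult_comm.
  apply Rmult_le_compat; lra.
Qed.
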